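(* Let $G$ be a bus graph, and let $G'$ be the bus graph obtained from $G$ by removing duplicate $\mathcal{C}$-vertices, i.e. keeping exactly one $\mathcal{C}$-vertex from each class of $\mathcal{C}$-vertices having identical neighborhoods in $\mathcal{B}$ (and deleting the others with their edges). Then $G$ is realizable if and only if $G'$ is realizable.
   Context: A bus graph is a finite bipartite graph $G=(\mathcal{B},\mathcal{C};\mathcal{E})$ with $\deg(c)\le 4$ for all $c\in\mathcal{C}$. A realization $\Gamma$ of $G$ in the integer grid is a drawing such that: (1) each $B\in\mathcal{B}$ is drawn as a closed line segment $\Gamma(B)$ along a grid line (a ''bus''); (2) each $c\in\mathcal{C}$ is drawn as a grid point $\Gamma(c)$ (a ''connector''); (3) each edge $(B,c)\in\mathcal{E}$ is drawn as a closed line segment along a grid line between a point of $\Gamma(B)$ and $\Gamma(c)$, perpendicular to $\Gamma(B)$, containing no connectors or buses other than $\Gamma(B)$ and $\Gamma(c)$ (an edge may meet the bus at an endpoint of the bus; edges may cross other edges); (4) no two buses or connectors intersect. $G$ is realizable if it has such a realization. *)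

(* Defs.v *)
From mathcomp Require Import all_boot all_order all_algebra.
Set Implicit Arguments. Unset Strict Implicit. Unset Printing Implicit Defensive.
Import Order.TTheory GRing.Theory Num.Theory.
Local Open Scope ring_scope.

(* A bipartite graph with finite vertex classes B (buses) and C (connectors),
   edge relation E b c. *)
Definition nbh (B C : finType) (E : B -> C -> bool) (c : C) : {set B} :=
  [set b | E b c].

Definition bus_graph (B C : finType) (E : B -> C -> bool) : Prop :=
  forall c : C, (#|nbh E c| <= 4)%N.

Definition point := (int * int)%type.

(* Axis-parallel segment: if [horiz] it is {(x, line) | lo <= x <= hi},
   otherwise {(line, y) | lo <= y <= hi}.  We only test lattice points. *)
Record segment := Seg { horiz : bool; line : int; lo : int; hi : int }.

Definition on_seg (s : segment) (p : point) : bool :=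
  if horiz s then (p.2 == line s) && (lo s <= p.1 <= hi s)
  else (p.1 == line s) && (lo s <= p.2 <= hi s).

(* The edge from bus s to connector point p: the segment perpendicular to s,
   along the grid line through p, from s's line to p. *)
Definition edge_seg (s : segment) (p : point) : segment :=
  if horiz s then Seg false p.1 (Num.min (line s) p.2) (Num.max (line s) p.2)
  else Seg true p.2 (Num.min (line s) p.1) (Num.max (line s) p.1).

(* The foot of the edge (on the line of s) lies on the bus s. *)
Definition edge_attaches (s : segment) (p : point) : bool :=
  if horiz s then lo s <= p.1 <= hi s else lo s <= p.2 <= hi s.

Definition is_realization (B C : finType) (E : B -> C -> bool)
    (bus : B -> segment) (conn : C -> point) : Prop :=
  (forall b, lo (bus b) <= hi (bus b)) /\
  (forall b1 b2, b1 <> b2 -> forall p, ~ (on_seg (bus b1) p /\ on_seg (bus b2) p)) /\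
  injective conn /\
  (forall b c, ~ on_seg (bus b) (conn c)) /\
  (forall b c, E b c ->
     edge_attaches (bus b) (conn c) /\
     (forall c', c' <> c -> ~ on_seg (edge_seg (bus b) (conn c)) (conn c')) /\
     (forall b', b' <> b -> forall p,
        ~ (on_seg (edge_seg (bus b) (conn c)) p /\ on_seg (bus b') p))).

Definition realizable (B C : finType) (E : B -> C -> bool) : Prop :=
  exists (bus : B -> segment) (conn : C -> point), is_realization E bus conn.

Definition dup_reps (B C : finType) (E : B -> C -> bool) (C' : {set C}) : Prop :=
  (forall c : C, exists2 c', c' \in C' & nbh E c' = nbh E c) /\
  {in C' &, forall c1 c2, nbh E c1 = nbh E c2 -> c1 = c2}.

Definition restrictC (B C : finType) (E : B -> C -> bool) (C' : {set C})
    : B -> {c : C | c \in C'} -> bool :=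
  fun b c => E b (val c).

(* Main.v *)
Require Import Defs.
From mathcomp Require Import all_boot all_order all_algebra.
Set Implicit Arguments. Unset Strict Implicit. Unset Printing Implicit Defensive.
Import Order.TTheory GRing.Theory Num.Theory.
Local Open Scope ring_scope.

Definition sc_seg (K m : int) (s : segment) :=
  Seg (horiz s) (line s * K) (lo s * K) (hi s * K + m).
Definition shrink (K : int) (p : point) : point := ((p.1 %/ K)%Z, (p.2 %/ K)%Z).

Lemma divK (K a r : int) : 0 < K -> 0 <= r < K -> ((a * K + r) %/ K)%Z = a.
Proof.
move=> K0 /andP[r0 rK]; rewrite divzMDl ?gt_eqF // divz_small ?addr0 //.
by rewrite r0 /= abszE gtr0_norm.
Qed.

Lemma modK (K a r : int) : 0 < K -> 0 <= r < K -> ((a * K + r) %% K)%Z = r.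
Proof. by move=> K0 rK; rewrite modzMDl modz_small. Qed.

Lemma mulK' (K a : int) : 0 < K -> ((a * K) %/ K)%Z = a.
Proof. by move=> K0; rewrite mulzK ?gt_eqF. Qed.

Lemma shrink_seg K m s p : 0 < K -> 0 <= m < K ->
  on_seg (sc_seg K m s) p -> on_seg s (shrink K p).
Proof.
move=> K0 mK; case: s => [[] l a b]; rewrite /on_seg /=.
- case/andP => /eqP -> /andP[h1 h2]; rewrite mulK' // eqxx /=.
  have := lez_pdiv2r (ltW K0) h1; have := lez_pdiv2r (ltW K0) h2.
  by rewrite mulK' // divK // => -> ->.
- case/andP => /eqP -> /andP[h1 h2]; rewrite mulK' // eqxx /=.
  have := lez_pdiv2r (ltW K0) h1; have := lez_pdiv2r (ltW K0) h2.
  by rewrite mulK' // divK // => -> ->.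
Qed.

Lemma shrink_edge K m s (q : point) r p : 0 < K -> 0 <= m < K -> 0 <= r < K ->
  on_seg (edge_seg (sc_seg K m s) (q.1 * K + r, q.2 * K + r)) p ->
  on_seg (edge_seg s q) (shrink K p).
Proof.
move=> K0 mK rK; case: s => [[] l a b]; rewrite /on_seg /edge_seg /=.
- case/andP => /eqP -> /andP[h1 h2]; rewrite divK // eqxx /=.
  apply/andP; split.
  + move: h1; rewrite ge_min => /orP[] h; rewrite ge_min; apply/orP.
    * by left; have := lez_pdiv2r (ltW K0) h; rewrite mulK'.
    * by right; have := lez_pdiv2r (ltW K0) h; rewrite divK.
  + move: h2; rewrite le_max => /orP[] h; rewrite le_max; apply/orP.
    * by left; have := lez_pdiv2r (ltW K0) h; rewrite mulK'.
    * by right; have := lez_pdiv2r (ltW K0) h; rewrite divK.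
- case/andP => /eqP -> /andP[h1 h2]; rewrite divK // eqxx /=.
  apply/andP; split.
  + move: h1; rewrite ge_min => /orP[] h; rewrite ge_min; apply/orP.
    * by left; have := lez_pdiv2r (ltW K0) h; rewrite mulK'.
    * by right; have := lez_pdiv2r (ltW K0) h; rewrite divK.
  + move: h2; rewrite le_max => /orP[] h; rewrite le_max; apply/orP.
    * by left; have := lez_pdiv2r (ltW K0) h; rewrite mulK'.
    * by right; have := lez_pdiv2r (ltW K0) h; rewrite divK.
Qed.

Theorem lemma1 (B C : finType) (E : B -> C -> bool) (C' : {set C}) :
  bus_graph E -> dup_reps E C' ->
  (realizable E <-> realizable (@restrictC B C E C')).
Proof.
move=> _ [Hrep _]; split.
- case=> bus [conn [H1 [H2 [H3 [H4 H5]]]]].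
  exists bus, (fun s => conn (val s)); split; first by [].
  split; first by [].
  split; first by move=> x y /H3 /val_inj.
  split; first by move=> b c; apply: H4.
  move=> b c Ebc; have [A1 [A2 A3]] := H5 b (val c) Ebc.
  split; first by [].
  split; last by [].
  by move=> c' nc'; apply: A2 => /val_inj.
- case=> bus [conn [H1 [H2 [H3 [H4 H5]]]]].
  have ex c : exists s : {x : C | x \in C'}, nbh E (val s) == nbh E c.
    have [c' c'C eq] := Hrep c.
    by exists (Sub c' c'C); rewrite /= eq.
  pose sc c := sval (sigW (ex c)).
  have scE c : nbh E (val (sc c)) = nbh E c by apply/eqP; exact: (svalP (sigW (ex c))).
  have EE b c : E b c = restrictC E b (sc c).
    by have /setP/(_ b) := scE c; rewrite /restrictC /nbh !inE.
  pose K : int := (#|C|.+1)%:Z.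
  pose m : int := (#|C|)%:Z.
  pose j (c : C) : int := ((enum_rank c).+1)%:Z.
  have K0 : 0 < K by [].
  have mK : 0 <= m < K by rewrite /m /K ltz_nat ltnSn.
  have jK c : 0 <= j c < K by rewrite /j /K ltz_nat ltnS; case: (enum_rank c).
  have jm c : j c <= m by rewrite /j /m lez_nat; case: (enum_rank c).
  pose P c := conn (sc c).
  pose conn2 c : point := ((P c).1 * K + j c, (P c).2 * K + j c).
  have shc c : shrink K (conn2 c) = P c.
    by rewrite /shrink /conn2 /= !divK //; case: (P c).
  have jinj c c' : j c = j c' -> c = c'.
    by rewrite /j => -[] h; apply: enum_rank_inj; apply: val_inj.
  exists (fun b => sc_seg K m (bus b)), conn2.
  split.
    move=> b; rewrite /sc_seg /=; apply: ler_wpDr; first by case/andP: mK.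
    by rewrite ler_pM2r.
  split.
    move=> b1 b2 nb p [o1 o2]; apply: (H2 b1 b2 nb (shrink K p)).
    by split; apply: shrink_seg o1 || apply: shrink_seg o2.
  split.
    move=> c c' [e1 e2]; apply: jinj.
    by rewrite -(modK (P c).1 K0 (jK c)) -(modK (P c').1 K0 (jK c')) e1.
  split.
    by move=> b c /(shrink_seg K0 mK); rewrite shc; apply: H4.
  move=> b c; rewrite EE => Ebc; have [A1 [A2 A3]] := H5 b (sc c) Ebc.
  split.
    move: A1; rewrite /edge_attaches /sc_seg /conn2 /=; rewrite -/(P c).
    case: (horiz (bus b)) => /andP[a1 a2]; apply/andP; split.
    - by apply: ler_wpDr; [case/andP: (jK c)|rewrite ler_pM2r].
    - by apply: lerD; [rewrite ler_pM2r|].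
    - by apply: ler_wpDr; [case/andP: (jK c)|rewrite ler_pM2r].
    - by apply: lerD; [rewrite ler_pM2r|].
  split.
    move=> c' nc'; rewrite /edge_seg /sc_seg /on_seg /=.
    case: (horiz (bus b)) => /= /andP[/eqP e _]; apply: nc'; apply: jinj.
    - by rewrite -(modK (P c).1 K0 (jK c)) -(modK (P c').1 K0 (jK c')) e.
    - by rewrite -(modK (P c).2 K0 (jK c)) -(modK (P c').2 K0 (jK c')) e.
  move=> b' nb p [o1 o2]; apply: (A3 b' nb (shrink K p)); split.
    exact: (shrink_edge K0 mK (jK c) o1).
  exact: (shrink_seg K0 mK o2).
Qed.
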